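(* Let $\mathfrak{R}$ be either $\mathbb{F}_q$ ($q$ a prime power) or $\mathbb{Z}_k$ ($k\ge2$), with character $\chi$ as in the context. Let $C$ and $D$ be $\mathfrak{R}$-linear codes of length $n$ and $\bm{w}\in\mathfrak{R}^n$. Then (i) $\displaystyle \mathfrak{Jac}^{av}(C,D^{\perp},\bm{w};x_a:a\in\mathfrak{R}^3)=\frac{1}{|D|}\mathfrak{Jac}^{av}\Big(C,D,\bm{w};\sum_{b\in\mathfrak{R}}\chi(a_2b)x_{(a_1,b,a_3)}:a\in\mathfrak{R}^3\Big)$; (ii) $\displaystyle \mathfrak{Jac}^{av}(C^{\perp},D,\bm{w};x_a:a\in\mathfrak{R}^3)=\frac{1}{|C|}\mathfrak{Jac}^{av}\Big(C,D,\bm{w};\sum_{b\in\mathfrak{R}}\chi(a_1b)x_{(b,a_2,a_3)}:a\in\mathfrak{R}^3\Big)$; (iii) $\displaystyle \mathfrak{Jac}^{av}(C^{\perp},D^{\perp},\bm{w};x_a:a\in\mathfrak{R}^3)=\frac{1}{|C||D|}\mathfrak{Jac}^{av}\Big(C,D,\bm{w};\sum_{b_1,b_2\in\mathfrak{R}}\chi(a_1b_1+a_2b_2)x_{(b_1,b_2,a_3)}:a\in\mathfrak{R}^3\Big)$, where on each right-hand side every variable $x_{(a_1,a_2,a_3)}$ of $\mathfrak{Jac}^{av}(C,D,\bm{w};x_a:a\in\mathfrak{R}^3)$ is replaced by the indicated linear form.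
   Context: An $\mathbb{F}_q$-linear code of length $n$ is a subspace of $\mathbb{F}_q^n$; a $\mathbb{Z}_k$-linear code is an additive subgroup of $\mathbb{Z}_k^n$. $C^\perp=\{\bm{v}\in\mathfrak{R}^n : \sum_iu_iv_i=0\ \forall\bm{u}\in C\}$. The character $\chi$: if $\mathfrak{R}=\mathbb{F}_q$, $q=p^f$, fix a root $\lambda$ of a primitive irreducible polynomial of degree $f$ over $\mathbb{F}_p$, write $\alpha=\alpha_0+\alpha_1\lambda+\cdots+\alpha_{f-1}\lambda^{f-1}$ ($\alpha_i\in\mathbb{F}_p$) and set $\chi(\alpha)=\zeta_p^{\alpha_0}$; if $\mathfrak{R}=\mathbb{Z}_k$, $\chi(\alpha)=\zeta_k^{\alpha}$ ($\zeta_m$ a primitive $m$-th root of unity). For $a\in\mathfrak{R}^3$, $h_a(\bm{u},\bm{v};\bm{w})=\#\{i:(u_i,v_i,w_i)=a\}$; $\mathfrak{Jac}(C,D,\bm{w};x_a:a\in\mathfrak{R}^3)=\sum_{\bm{u}\in C,\bm{v}\in D}\prod_{a\in\mathfrak{R}^3}x_a^{h_a(\bm{u},\bm{v};\bm{w})}$. For $\sigma\in S_n$, $\bm{u}^\sigma=(u_{\sigma(1)},\dots,u_{\sigma(n)})$, $C^\sigma=\{\bm{u}^\sigma:\bm{u}\in C\}$. The average complete joint Jacobi polynomial is $\mathfrak{Jac}^{av}(C,D,\bm{w};x_a:a\in\mathfrak{R}^3)=\frac{1}{n!}\sum_{\sigma\in S_n}\mathfrak{Jac}(C^\sigma,D,\bm{w};x_a:a\in\mathfrak{R}^3)$.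 *)

(* Defs.v *)
From HB Require Import structures.
From mathcomp Require Import all_boot all_order all_algebra all_fingroup all_field.
From mathcomp Require Import mpoly.
Set Implicit Arguments. Unset Strict Implicit. Unset Printing Implicit Defensive.
Import Order.TTheory GRing.Theory Num.Theory.
Local Open Scope ring_scope.

Section JacobiDefs.
Variable R : finComNzRingType.

Definition R3 := (R * R * R)%type.
Definition nvar := #|{: R3}|.
Definition JPoly := {mpoly algC[nvar]}.
Definition xvar (a : R3) : JPoly := 'X_(enum_rank a).

Variable n : nat.
Definition word := 'rV[R]_n.

Definition permw (s : 'S_n) (u : word) : word := \row_i u ord0 (s i).
Definition permc (s : 'S_n) (C : {set word}) : {set word} :=
  [set permw s u | u in C].

Definition dual (C : {set word}) : {set word} :=
  [set v : word | [forall u in C, \sum_i u ord0 i * v ord0 i == 0]].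

Definition hcount (a : R3) (u v w : word) : nat :=
  #|[set i : 'I_n | (u ord0 i, v ord0 i, w ord0 i) == a]|.

Definition Jac (C D : {set word}) (w : word) : JPoly :=
  \sum_(u in C) \sum_(v in D) \prod_(a : R3) xvar a ^+ hcount a u v w.

Definition Jav (C D : {set word}) (w : word) : JPoly :=
  (n`!%:R : algC)^-1 *: \sum_(s : 'S_n) Jac (permc s C) D w.

Definition subst (L : R3 -> JPoly) (P : JPoly) : JPoly :=
  comp_mpoly [tuple L (enum_val i) | i < nvar] P.

Definition formI (chi : R -> algC) (a : R3) : JPoly :=
  let: (a1, a2, a3) := a in \sum_(b : R) chi (a2 * b) *: xvar (a1, b, a3).
Definition formII (chi : R -> algC) (a : R3) : JPoly :=
  let: (a1, a2, a3) := a in \sum_(b : R) chi (a1 * b) *: xvar (b, a2, a3).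
Definition formIII (chi : R -> algC) (a : R3) : JPoly :=
  let: (a1, a2, a3) := a in
  \sum_(b1 : R) \sum_(b2 : R) chi (a1 * b1 + a2 * b2) *: xvar (b1, b2, a3).

End JacobiDefs.

(* Jav C D w  is  Jac^av(C, D, w; x_a : a in R^3), the average being over
   the permutations of the first code, as in the paper. *)
Definition MacWilliamsJacAv (R : finComNzRingType) (chi : R -> algC)
  (islin : forall n, {set 'rV[R]_n} -> Prop) : Prop :=
  forall (n : nat) (C D : {set 'rV[R]_n}) (w : 'rV[R]_n),
    islin n C -> islin n D ->
    [/\ Jav C (dual D) w
          = (#|D|%:R : algC)^-1 *: subst (formI chi) (Jav C D w),
        Jav (dual C) D w
          = (#|C|%:R : algC)^-1 *: subst (formII chi) (Jav C D w)
      & Jav (dual C) (dual D) w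
          = ((#|C| * #|D|)%:R : algC)^-1 *: subst (formIII chi) (Jav C D w)].

Definition subspace_code (F : finFieldType) (n : nat) (C : {set 'rV[F]_n}) : Prop :=
  [/\ 0 \in C,
      forall u v, u \in C -> v \in C -> u + v \in C
    & forall (c : F) u, u \in C -> c *: u \in C].

Definition subgroup_code (k : nat) (n : nat) (C : {set 'rV['Z_k]_n}) : Prop :=
  [/\ 0 \in C,
      forall u v, u \in C -> v \in C -> u + v \in C
    & forall u, u \in C -> - u \in C].

(* Character of F_q, q = p^f: lam is a root of a primitive irreducible
   polynomial of degree f over F_p (i.e. a generator of F_q^x), coord a i
   is the i-th coordinate of a in the F_p-basis 1, lam, ..., lam^(f-1),
   and chi a = zeta_p ^ (coordinate 0). *)
Definition Fq_char_data (F : finFieldType) (p f : nat) (lam : F)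
  (coord : F -> nat -> 'I_p) (zeta : algC) : Prop :=
  [/\ prime p /\ p \in [pchar F], #|F| = (p ^ f)%N,
      (#|F|.-1).-primitive_root lam,
      (forall a : F, a = \sum_(i < f) ((coord a i : nat)%:R * lam ^+ i))
    & p.-primitive_root zeta].

(* Main.v *)
Require Import Defs.
From HB Require Import structures.
From mathcomp Require Import all_boot all_order all_algebra all_fingroup all_field.
From mathcomp Require Import mpoly.
Set Implicit Arguments. Unset Strict Implicit. Unset Printing Implicit Defensive.
Import GRing.Theory Num.Theory.
Local Open Scope ring_scope.

Section Generic.
Variable R : finComNzRingType.
Variable n : nat.
Local Notation word := (word R n).
Local Notation JP := (JPoly R).

Definition dot (u v : 'rV[R]_n) : R := \sum_i u ord0 i * v ord0 i.

Lemma monoE (t : 'I_n -> R3 R) :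
  \prod_(a : R3 R) xvar a ^+ #|[set i | t i == a]| = \prod_i xvar (t i).
Proof.
rewrite [RHS](partition_big t predT) //=.
apply: eq_bigr => a _.
rewrite (eq_bigr (fun=> xvar a)); last by move=> i /eqP->.
by rewrite prodr_const cardsE.
Qed.

Lemma JacE (C D : {set word}) (w : word) : Jac C D w =
  \sum_(u in C) \sum_(v in D) \prod_i xvar (u ord0 i, v ord0 i, w ord0 i).
Proof.
by apply: eq_bigr => u _; apply: eq_bigr => v _; rewrite -monoE.
Qed.

Lemma substX (L : R3 R -> JP) a : subst L (xvar a) = L a.
Proof. by rewrite /subst /xvar comp_mpolyXU -tnth_nth tnth_mktuple enum_rankK. Qed.

Lemma subst_prod (L : R3 R -> JP) (P : 'I_n -> JP) : subst L (\prod_i P i) = \prod_i subst L (P i).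
Proof. by rewrite /subst rmorph_prod. Qed.

Lemma substZ (L : R3 R -> JP) c (P : JP) : subst L (c *: P) = c *: subst L P.
Proof. by rewrite /subst comp_mpolyZ. Qed.

Lemma subst_sum I (r : seq I) (Pr : pred I) (L : R3 R -> JP) (P : I -> JP) :
  subst L (\sum_(i <- r | Pr i) P i) = \sum_(i <- r | Pr i) subst L (P i).
Proof. by rewrite /subst raddf_sum. Qed.

Lemma substJac (L : R3 R -> JP) (C D : {set word}) (w : word) : subst L (Jac C D w) =
  \sum_(u in C) \sum_(v in D) \prod_i L (u ord0 i, v ord0 i, w ord0 i).
Proof.
rewrite JacE subst_sum; apply: eq_bigr => u _; rewrite subst_sum.
by apply: eq_bigr => v _; rewrite subst_prod; apply: eq_bigr => i _; rewrite substX.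
Qed.

Lemma expand (G : 'I_n -> R -> JP) :
  \prod_i \sum_(b : R) G i b = \sum_(b : word) \prod_i G i (b ord0 i).
Proof.
rewrite bigA_distr_bigA /=.
pose h (b : word) : {ffun 'I_n -> R} := [ffun i => b ord0 i].
pose k (f : {ffun 'I_n -> R}) : word := \row_i f i.
have hK : cancel h k by move=> b; apply/rowP => i; rewrite /k /h mxE ffunE.
have kK : cancel k h by move=> f; apply/ffunP => i; rewrite /k /h ffunE mxE.
rewrite (reindex h); last by exists k => x _.
by apply: eq_bigr => b _; apply: eq_bigr => i _; rewrite ffunE.
Qed.


Section Chi.
Variable chi : R -> algC.
Hypothesis chiD : forall a b, chi (a + b) = chi a * chi b.
Hypothesis chi0 : chi 0 = 1.

Definition orth (D : {set word}) := forall b : word,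
  \sum_(d in D) chi (dot d b) = if b \in dual D then #|D|%:R else 0.

Lemma chi_dot u v : chi (dot u v) = \prod_i chi (u ord0 i * v ord0 i).
Proof. by rewrite /dot (big_morph chi chiD chi0). Qed.

Lemma macw (D : {set word}) (F : word -> JP) : orth D ->
  \sum_(d in D) \sum_(b : word) chi (dot d b) *: F b = #|D|%:R *: \sum_(b in dual D) F b.
Proof.
move=> HD; rewrite exchange_big /=.
under eq_bigr do rewrite -scaler_suml HD.
rewrite scaler_sumr [RHS]big_mkcond /=; apply: eq_bigr => b _.
by case: ifP; rewrite ?scale0r.
Qed.

Lemma formI_prod (u v w : word) :
  \prod_i formI chi (u ord0 i, v ord0 i, w ord0 i) =
  \sum_(b : word) chi (dot v b) *: \prod_i xvar (u ord0 i, b ord0 i, w ord0 i).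
Proof.
rewrite /formI expand; apply: eq_bigr => b _.
by rewrite scaler_prod chi_dot.
Qed.

Lemma formII_prod (u v w : word) :
  \prod_i formII chi (u ord0 i, v ord0 i, w ord0 i) =
  \sum_(b : word) chi (dot u b) *: \prod_i xvar (b ord0 i, v ord0 i, w ord0 i).
Proof.
rewrite /formII expand; apply: eq_bigr => b _.
by rewrite scaler_prod chi_dot.
Qed.

Lemma natr_inv_scale (m : nat) (P : JP) : (0 < m)%N -> (m%:R : algC)^-1 *: (m%:R *: P) = P.
Proof. by move=> m0; rewrite scalerA mulVf ?scale1r // pnatr_eq0 -lt0n. Qed.

Lemma partI (C D : {set word}) (w : word) : orth D -> (0 < #|D|)%N ->
  Jac C (dual D) w = (#|D|%:R : algC)^-1 *: subst (formI chi) (Jac C D w).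
Proof.
move=> HD D0; rewrite substJac JacE scaler_sumr; apply: eq_bigr => u _.
under [in RHS]eq_bigr do rewrite formI_prod.
by rewrite macw // natr_inv_scale.
Qed.

Lemma partII (C D : {set word}) (w : word) : orth C -> (0 < #|C|)%N ->
  Jac (dual C) D w = (#|C|%:R : algC)^-1 *: subst (formII chi) (Jac C D w).
Proof.
move=> HC C0; rewrite substJac.
rewrite JacE.
under [in RHS]eq_bigr => u _.
  under eq_bigr => v _ do rewrite formII_prod.
  over.
rewrite [in RHS]exchange_big /=.
under [in RHS]eq_bigr do rewrite macw //.
rewrite -scaler_sumr natr_inv_scale // exchange_big /=.
done.
Qed.

Lemma substIII a : subst (formII chi) (formI chi a) = formIII chi a.
Proof.
case: a => [[a1 a2] a3] /=.
rewrite subst_sum.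
have E : forall b, subst (formII chi) (chi (a2 * b) *: xvar (a1, b, a3)) =
   \sum_b1 chi (a2 * b) *: (chi (a1 * b1) *: xvar (b1, b, a3)).
  by move=> b; rewrite substZ substX /= scaler_sumr.
rewrite (eq_bigr _ (fun b _ => E b)).
rewrite exchange_big /=; apply: eq_bigr => b1 _; apply: eq_bigr => b2 _.
by rewrite scalerA chiD mulrC.
Qed.

Lemma partIII (C D : {set word}) (w : word) : orth C -> (0 < #|C|)%N ->
  orth D -> (0 < #|D|)%N ->
  Jac (dual C) (dual D) w =
  ((#|C| * #|D|)%:R : algC)^-1 *: subst (formIII chi) (Jac C D w).
Proof.
move=> HC C0 HD D0.
rewrite (partII _ _ HC C0) (partI _ _ HD D0) substZ scalerA natrM invfM mulrC.
congr (_ *: _); rewrite !substJac subst_sum; apply: eq_bigr => u _.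
rewrite subst_sum; apply: eq_bigr => v _; rewrite subst_prod.
by apply: eq_bigr => i _; rewrite substIII.
Qed.

End Chi.

Lemma permwK s : cancel (@permw R n s) (permw s^-1).
Proof. by move=> u; apply/rowP => i; rewrite !mxE permKV. Qed.

Lemma permw_inj s : injective (@permw R n s).
Proof. exact: can_inj (permwK s). Qed.

Lemma permwVK s : cancel (@permw R n s^-1) (permw s).
Proof. by move=> u; apply/rowP => i; rewrite !mxE permK. Qed.

Lemma dot_perm s u v : dot (permw s u) (permw s v) = dot u v.
Proof.
rewrite /dot [RHS](reindex_inj (@perm_inj _ s)) /=.
by apply: eq_bigr => i _; rewrite !mxE.
Qed.

Lemma card_permc s (C : {set word}) : #|permc s C| = #|C|.
Proof. by rewrite card_imset //; apply: permw_inj. Qed.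

Lemma permc_dual s (C : {set word}) : permc s (dual C) = dual (permc s C).
Proof.
apply/setP => x; apply/imsetP/idP.
  case=> u uC ->; rewrite inE; apply/forallP => y; apply/implyP.
  case/imsetP => c cC ->.
  move: uC; rewrite inE => /forallP /(_ c) /implyP /(_ cC).
  by rewrite -[X in X == 0]/(dot c u) -(dot_perm s).
move=> xD; exists (permw s^-1 x); last by rewrite permwVK.
rewrite inE; apply/forallP => c; apply/implyP => cC.
rewrite -[X in X == 0]/(dot c _) -(dot_perm s) permwVK.
move: xD; rewrite inE => /forallP /(_ (permw s c)) /implyP; apply.
exact: imset_f.
Qed.

End Generic.

Unset Implicit Arguments.
Section GenMain.
Variable R : finComNzRingType.
Variable chi : R -> algC.
Hypothesis chiD : forall a b, chi (a + b) = chi a * chi b.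
Hypothesis chi0 : chi 0 = 1.
Variable islin : forall n, {set 'rV[R]_n} -> Prop.
Hypothesis lin0 : forall n C, islin n C -> 0 \in C.
Hypothesis linP : forall n C s, islin n C -> islin n (permc s C).
Hypothesis linO : forall n C, islin n C -> orth chi C.

Lemma substJav n (L : R3 R -> JPoly R) (C D : {set 'rV[R]_n}) w :
  subst L (Jav C D w) = (n`!%:R : algC)^-1 *: \sum_s subst L (Jac (permc s C) D w).
Proof. by rewrite /Jav substZ subst_sum. Qed.

Lemma card_gt0 n (C : {set 'rV[R]_n}) : islin n C -> (0 < #|C|)%N.
Proof. by move=> /lin0 C0; apply/card_gt0P; exists 0. Qed.

Theorem generic_main : MacWilliamsJacAv chi islin.
Proof.
move=> n C D w HC HD; split.
- rewrite substJav /Jav scalerA mulrC -scalerA; congr (_ *: _).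
  rewrite scaler_sumr; apply: eq_bigr => s _.
  by rewrite (partI chiD chi0) //; [apply: linO | apply: card_gt0].
- rewrite substJav /Jav scalerA mulrC -scalerA; congr (_ *: _).
  rewrite scaler_sumr; apply: eq_bigr => s _.
  have HC' := linP n C s HC.
  by rewrite permc_dual (partII chiD chi0 _ _ (linO _ _ HC') (card_gt0 _ _ HC')) card_permc.
- rewrite substJav /Jav scalerA mulrC -scalerA; congr (_ *: _).
  rewrite scaler_sumr; apply: eq_bigr => s _.
  have HC' := linP n C s HC.
  by rewrite permc_dual (partIII chiD chi0 _ (linO _ _ HC') (card_gt0 _ _ HC') (linO _ _ HD) (card_gt0 _ _ HD)) card_permc.
Qed.

End GenMain.
Set Implicit Arguments.

Section Orth.
Variable R : finComNzRingType.
Variable n : nat.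
Variable chi : R -> algC.
Hypothesis chiD : forall a b, chi (a + b) = chi a * chi b.
Hypothesis chi0 : chi 0 = 1.

Lemma dotDl (u v b : 'rV[R]_n) : dot (u + v) b = dot u b + dot v b.
Proof. by rewrite /dot -big_split; apply: eq_bigr => i _; rewrite mxE mulrDl. Qed.

Lemma dotZl (c : R) (u b : 'rV[R]_n) : dot (c *: u) b = c * dot u b.
Proof. by rewrite /dot mulr_sumr; apply: eq_bigr => i _; rewrite mxE mulrA. Qed.

Lemma orth_gen (D : {set 'rV[R]_n}) :
  (forall u v, u \in D -> v \in D -> u + v \in D) ->
  (forall b, b \notin dual D -> exists2 d, d \in D & chi (dot d b) != 1) ->
  orth chi D.
Proof.
move=> Dadd Hnt b; case: ifPn => bD.
  rewrite (eq_bigr (fun _ => 1)); first by rewrite sumr_const.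
  move=> d dD; move: bD; rewrite inE => /forallP /(_ d) /implyP /(_ dD) /eqP.
  by rewrite -[X in X = 0]/(dot d b) => ->.
have [d0 d0D nt] := Hnt b bD.
set S := \sum_(d in D) _.
have inj : injective (fun d : 'rV[R]_n => d0 + d) by apply: addrI.
have im : [set d0 + d | d in D] = D.
  apply/eqP; rewrite eqEcard card_imset // leqnn andbT.
  by apply/subsetP => x /imsetP [d dD ->]; apply: Dadd.
have ES : S = chi (dot d0 b) * S.
  rewrite {1}/S -{1}im big_imset /=; last by move=> x y _ _; apply: inj.
  rewrite /S mulr_sumr; apply: eq_bigr => d _; by rewrite dotDl chiD.
have : (1 - chi (dot d0 b)) * S = 0 by rewrite mulrBl mul1r -ES subrr.
by move/eqP; rewrite mulf_eq0 subr_eq0 eq_sym (negbTE nt) /= => /eqP.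
Qed.

Lemma permw_add s (u v : 'rV[R]_n) : permw s (u + v) = permw s u + permw s v.
Proof. by apply/rowP => i; rewrite !mxE. Qed.
Lemma permw_scale s c (u : 'rV[R]_n) : permw s (c *: u) = c *: permw s u.
Proof. by apply/rowP => i; rewrite !mxE. Qed.
Lemma permw_opp s (u : 'rV[R]_n) : permw s (- u) = - permw s u.
Proof. by apply/rowP => i; rewrite !mxE. Qed.
Lemma permw0 s : permw s (0 : 'rV[R]_n) = 0.
Proof. by apply/rowP => i; rewrite !mxE. Qed.

End Orth.

Lemma Zk_main (k : nat) (zeta : algC) :
  (1 < k)%N -> k.-primitive_root zeta ->
  MacWilliamsJacAv (fun a : 'Z_k => zeta ^+ (a : nat)) (@subgroup_code k).
Proof.
move=> k1 pz.
have kE := Zp_cast k1.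
have chi1 : forall x : 'Z_k, x != 0 -> zeta ^+ (x : nat) != 1.
  move=> x x0; rewrite -(expr0 zeta) (eq_prim_root_expr pz) mod0n.
  have xk : (x < k)%N by rewrite -{2}kE ltn_ord.
  by rewrite modn_small //; apply: contra x0 => /eqP x0; apply/eqP/val_inj.
have chiD : forall a b : 'Z_k, zeta ^+ (((a + b)%R : 'Z_k) : nat) = zeta ^+ (a : nat) * zeta ^+ (b : nat).
  move=> a b; rewrite /= -exprD -(prim_expr_mod pz (a + b)); congr (_ ^+ _); move: (nat_of_ord a) (nat_of_ord b) => x y; by rewrite kE.
apply: (generic_main _ _ chiD) => //.
- by move=> m C [].
- move=> m C s [C0 Cadd Copp]; split.
  + by rewrite -(permw0 _ s); apply: imset_f.
  + move=> u v /imsetP [u' u'C ->] /imsetP [v' v'C ->].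
    by rewrite -permw_add; apply: imset_f; apply: Cadd.
  + move=> u /imsetP [u' u'C ->].
    by rewrite -permw_opp; apply: imset_f; apply: Copp.
- move=> m C [C0 Cadd Copp]; apply: orth_gen => // b.
  rewrite inE negb_forall => /existsP [d]; rewrite negb_imply => /andP [dC nz].
  by exists d => //; apply: chi1.
Qed.

Lemma Fq_main (F : finFieldType) (p f : nat) (lam : F)
      (coord : F -> nat -> 'I_p) (zeta : algC) :
  @Fq_char_data F p f lam coord zeta ->
  MacWilliamsJacAv (fun a : F => zeta ^+ (coord a 0%N : nat)) (@subspace_code F).
Proof.
case=> [[pp pF] cardF _ coordE pz].
have p1 := prime_gt1 pp.
have p0 : (0 < p)%N by apply: ltnW.
pose g (a : F) : {ffun 'I_f -> 'I_p} := [ffun i : 'I_f => coord a i].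
pose phi (h : {ffun 'I_f -> 'I_p}) : F := \sum_(i < f) ((h i : nat)%:R * lam ^+ i).
have phig : cancel g phi.
  by move=> a; rewrite [RHS]coordE /phi; apply: eq_bigr => i _; rewrite ffunE.
have bij : bijective g.
  apply: inj_card_bij; first exact: can_inj phig.
  by rewrite card_ffun !card_ord cardF.
have gphi : forall h, g (phi h) = h.
  move=> h; case: bij => g' gK g'K.
  by rewrite -{1}(g'K h) phig g'K.
have f0 : (0 < f)%N.
  case: f cardF {g phi phig bij gphi coordE coord} => // cardF.
  have := subset_leq_card (subsetT [set (0 : F); 1]).
  by rewrite cardsT cardF cards2 eq_sym oner_eq0.
pose i0 : 'I_f := Ordinal f0.
have coord0 : forall a, coord a 0%N = g a i0 by move=> a; rewrite ffunE.
have chiD : forall a b : F, zeta ^+ (coord (a + b) 0%N : nat) =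
                zeta ^+ (coord a 0%N : nat) * zeta ^+ (coord b 0%N : nat).
  move=> a b.
  pose h : {ffun 'I_f -> 'I_p} :=
    [ffun i : 'I_f => Ordinal (ltn_pmod (coord a i + coord b i) p0)].
  have ph : phi h = a + b.
    rewrite /phi (coordE a) (coordE b) -big_split /=; apply: eq_bigr => i _.
    by rewrite ffunE /= (GRing.natr_mod_pchar pF) natrD mulrDl.
  rewrite !coord0 -ph gphi ffunE /= (prim_expr_mod pz) exprD.
  by rewrite -!coord0.
have chi0 : zeta ^+ (coord 0 0%N : nat) = 1.
  pose h : {ffun 'I_f -> 'I_p} := [ffun i => Ordinal p0].
  have ph : phi h = 0 by rewrite /phi big1 // => i _; rewrite ffunE mul0r.
  by rewrite coord0 -ph gphi ffunE expr0.
have chi1 : zeta ^+ (coord 1 0%N : nat) != 1.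
  pose h : {ffun 'I_f -> 'I_p} :=
    [ffun i : 'I_f => if val i == 0%N then Ordinal p1 else Ordinal p0].
  have ph : phi h = 1.
    rewrite /phi (bigD1 i0) //= big1 ?addr0; first by rewrite ffunE /= mul1r expr0.
    move=> i ni0; rewrite ffunE ifF ?mul0r //.
    by apply: contraNF ni0 => /eqP v0; apply/eqP/val_inj.
  rewrite coord0 -ph gphi ffunE /= -(expr0 zeta) (eq_prim_root_expr pz) mod0n.
  by rewrite modn_small.
apply: (generic_main _ _ chiD chi0) => //.
- by move=> m C [].
- move=> m C s [C0 Cadd Cscale]; split.
  + by rewrite -(permw0 _ s); apply: imset_f.
  + move=> u v /imsetP [u' u'C ->] /imsetP [v' v'C ->].
    by rewrite -permw_add; apply: imset_f; apply: Cadd.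
  + move=> c u /imsetP [u' u'C ->].
    by rewrite -permw_scale; apply: imset_f; apply: Cscale.
- move=> m C [C0 Cadd Cscale]; apply: orth_gen => // b.
  rewrite inE negb_forall => /existsP [d]; rewrite negb_imply => /andP [dC nz].
  exists ((dot d b)^-1 *: d); first exact: Cscale.
  by rewrite dotZl mulVf.
Qed.

Theorem mainTheorem6 :
  (forall (F : finFieldType) (p f : nat) (lam : F)
          (coord : F -> nat -> 'I_p) (zeta : algC),
      @Fq_char_data F p f lam coord zeta ->
      MacWilliamsJacAv (fun a : F => zeta ^+ (coord a 0%N : nat))
                       (@subspace_code F))
  /\
  (forall (k : nat) (zeta : algC),
      (1 < k)%N -> k.-primitive_root zeta ->
      MacWilliamsJacAv (fun a : 'Z_k => zeta ^+ (a : nat)) (@subgroup_code k)).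
Proof.
split; [exact: Fq_main | exact: Zk_main].
Qed.
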